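(* For a flat virtual braid $\beta\in FVB_n$ let $G(\beta)$ be the quotient of the free group $F_{2n}$ with free basis $x_1,\dots,x_n,y_1,\dots,y_n$ by the relations $\theta(\beta)(x_i)=x_i$, $\theta(\beta)(y_i)=y_i$ ($i=1,\dots,n$) together with the relations $y_1=y_2=\dots=y_n$. Then $G(\beta)$ depends (up to isomorphism) not on the braid $\beta$ but only on its closure $\widehat\beta$: if $\beta\in FVB_n$ and $\beta'\in FVB_{n'}$ have equivalent closures, then $G(\beta)\cong G(\beta')$.
   Context: $FVB_n$ is the flat virtual braid group: generators $\sigma_1,\dots,\sigma_{n-1},\rho_1,\dots,\rho_{n-1}$, relations $\sigma_i\sigma_j=\sigma_j\sigma_i$, $\rho_i\rho_j=\rho_j\rho_i$, $\sigma_i\rho_j=\rho_j\sigma_i$ for $|i-j|\ge2$; $\sigma_i\sigma_{i+1}\sigma_i=\sigma_{i+1}\sigma_i\sigma_{i+1}$; $\rho_i\rho_{i+1}\rho_i=\rho_{i+1}\rho_i\rho_{i+1}$; $\rho_i\rho_{i+1}\sigma_i=\sigma_{i+1}\rho_i\rho_{i+1}$; $\rho_i^2=\sigma_i^2=1$. $\theta:FVB_n\to{\rm Aut}(F_{2n})$ is the homomorphism with $\theta(\sigma_i):x_i\mapsto x_{i+1}y_{i+1},\ x_{i+1}\mapsto x_iy_{i+1}^{-1}$ and $\theta(\rho_i):x_i\leftrightarrow x_{i+1},\ y_i\leftrightarrow y_{i+1}$ (other generators fixed), automorphisms composed on the right, $(fg)(x)=g(f(x))$. The closure $\widehat\beta$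 of a flat virtual braid is the flat virtual link diagram obtained by joining the top and bottom endpoints of its strands (flat crossings for $\sigma_i$, virtual crossings for $\rho_i$), and closures are compared up to equivalence of flat virtual links. *)

(* Defs.v *)
From mathcomp Require Import all_boot.
From Stdlib Require Import Relation_Operators.
Set Implicit Arguments. Unset Strict Implicit. Unset Printing Implicit Defensive.

(* Generators of FVB_n, 0-based: [Sig i] is sigma_(i+1), [Rho i] is rho_(i+1),
   for i < n-1.  An element of FVB_n is represented by a word (seq) in these
   generators (they are involutions, so no inverse letters are needed).     *)
Inductive fvb_gen (n : nat) : Type :=
| Sig of 'I_n.-1
| Rho of 'I_n.-1.

(* A generator is (isy, i): x_i if isy = false, y_i if isy = true (0-based). *)
Definition fgen := (bool * nat)%type.
(* A letter is (generator, inverted?). *)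
Definition fletter := (fgen * bool)%type.
Definition fword := seq fletter.

Definition winv (u : fword) : fword := rev [seq (l.1, ~~ l.2) | l <- u].

Definition subst (s : fgen -> fword) (u : fword) : fword :=
  flatten [seq if l.2 then winv (s l.1) else s l.1 | l <- u].

Definition theta_gen n (g : fvb_gen n) (a : fgen) : fword :=
  match g with
  | Sig i =>
      if a.1 then [:: (a, false)]
      else if a.2 == i then [:: ((false, i.+1), false); ((true, i.+1), false)]
      else if a.2 == i.+1 then [:: ((false, nat_of_ord i), false); ((true, i.+1), true)]
      else [:: (a, false)]
  | Rho i =>
      let k := a.2 in
      let k' := if k == i then i.+1 else if k == i.+1 then nat_of_ord i else k in
      [:: ((a.1, k'), false)]
  end.

(* theta(beta)(a), with right composition (fg)(x) = g(f(x)):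
   theta(g1 g2 ... gk)(a) = theta(gk)( ... theta(g1)(a) ...). *)
Definition theta n (w : seq (fvb_gen n)) (a : fgen) : fword :=
  foldl (fun u g => subst (theta_gen g) u) [:: (a, false)] w.

Definition Grel n (w : seq (fvb_gen n)) (r : fword) : Prop :=
  exists i, i < n /\
    (r = theta w (false, i) ++ [:: ((false, i), true)] \/
     r = theta w (true, i) ++ [:: ((true, i), true)] \/
     (i.+1 < n /\ r = [:: ((true, i), false); ((true, i.+1), true)])).

(* Equality in the group <generators | R>: congruence generated by free
   cancellation and deletion of relators. *)
Inductive greq (R : fword -> Prop) : fword -> fword -> Prop :=
| greq_refl u : greq R u u
| greq_sym u v : greq R u v -> greq R v u
| greq_trans u v w : greq R u v -> greq R v w -> greq R u w
| greq_red u v (a : fletter) : greq R (u ++ a :: (a.1, ~~ a.2) :: v) (u ++ v)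
| greq_rel u v r : R r -> greq R (u ++ r ++ v) (u ++ v).

Definition valid (n : nat) (u : fword) : bool := all (fun l => l.1.2 < n) u.

(* Isomorphism of the presented groups <x_i, y_i (i<n) | R> and
   <x_i, y_i (i<n') | R'>: mutually inverse homomorphisms, given by
   images of generators respecting the relators. *)
Definition pres_iso (n : nat) (R : fword -> Prop) (n' : nat) (R' : fword -> Prop) : Prop :=
  exists (phi psi : fgen -> fword),
    (forall a : fgen, a.2 < n -> valid n' (phi a)) /\
    (forall a : fgen, a.2 < n' -> valid n (psi a)) /\
    (forall r, R r -> greq R' (subst phi r) [::]) /\
    (forall r, R' r -> greq R (subst psi r) [::]) /\
    (forall a : fgen, a.2 < n -> greq R (subst psi (phi a)) [:: (a, false)]) /\
    (forall a : fgen, a.2 < n' -> greq R' (subst phi (psi a)) [:: (a, false)]).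

(* A flat virtual link diagram is encoded by its (flat) Gauss diagram:
   one cyclic word per component, listing the passages through the flat
   crossings in order along the component.  A passage is (c, tl): c the
   crossing label, tl = true iff this passage is the tail of the arrow of
   crossing c.  Convention: the arrow goes from passage p to passage q iff
   (tangent_p, tangent_q) is a positive basis of the plane.  Virtual
   crossings are invisible. *)
Definition gletter := (nat * bool)%type.
Definition gdiag := seq (seq gletter).

Definition glabels (D : gdiag) : seq nat := [seq l.1 | l <- flatten D].

Definition ins_at (T : Type) (s : seq T) (p : nat) (x : seq T) : seq T :=
  take p s ++ x ++ drop p s.

Definition upd_comp (D : gdiag) (i : nat) (s : seq gletter) : gdiag :=
  set_nth [::] D i s.

Definition swap2 (s : seq gletter) (p : nat) : seq gletter :=
  take p s ++ [:: nth (0, false) s p.+1; nth (0, false) s p] ++ drop p.+2 s.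

Definition R1step (D D' : gdiag) : Prop :=
  exists i p c (b : bool), i < size D /\ c \notin glabels D /\
    D' = upd_comp D i (ins_at (nth [::] D i) p [:: (c, b); (c, ~~ b)]).

(* Reidemeister 2: insert a bigon between two arcs (parallel or antiparallel) *)
Definition R2step (D D' : gdiag) : Prop :=
  exists i p j q c d (ba antipar : bool),
    c \notin glabels D /\ d \notin glabels D /\ c != d /\
    i < size D /\ j < size D /\ ~~ ((i == j) && (q == p.+1)) /\
    let X := [:: (c, ba); (d, ~~ ba)] in
    let Y := if antipar then [:: (d, ba); (c, ~~ ba)]
             else [:: (c, ~~ ba); (d, ba)] in
    let D1 := upd_comp D i (ins_at (nth [::] D i) p X) in
    D' = upd_comp D1 j (ins_at (nth [::] D1 j) q Y).

Definition cluster (D : gdiag) (ip : nat * nat) : gletter * gletter :=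
  (nth (0, false) (nth [::] D ip.1) ip.2, nth (0, false) (nth [::] D ip.1) ip.2.+1).

Definition cl_ok (D : gdiag) (ip : nat * nat) : bool :=
  (ip.1 < size D) && (ip.2.+1 < size (nth [::] D ip.1)).

Definition disjoint_cl (ip jq : nat * nat) : bool :=
  (ip.1 != jq.1) || (ip.2.+1 < jq.2) || (jq.2.+1 < ip.2).

Definition tailof (X : gletter * gletter) (p : nat) : bool :=
  if X.1.1 == p then X.1.2 else X.2.2.

(* Reidemeister 3: three arcs A, B, C pairwise crossing (at crossings
   p = AB, q = BC, r = CA), each arc carrying its two crossings as
   consecutive passages; the move reverses the order on each arc.  The
   configuration must be realizable by a triangle of three oriented lines,
   which amounts to the parity condition below. *)
Definition R3step (D D' : gdiag) : Prop :=
  exists (a b c : nat * nat) (p q r : nat),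
    [&& cl_ok D a, cl_ok D b, cl_ok D c,
        disjoint_cl a b, disjoint_cl b c & disjoint_cl a c] /\
    [&& p != q, q != r & p != r] /\
    let A := cluster D a in let B := cluster D b in let C := cluster D c in
    perm_eq [:: A.1.1; A.2.1] [:: p; r] /\
    perm_eq [:: B.1.1; B.2.1] [:: p; q] /\
    perm_eq [:: C.1.1; C.2.1] [:: q; r] /\
    let fA := A.1.1 == p in   (* A meets B first *)
    let fB := B.1.1 == q in   (* B meets C first *)
    let fC := C.1.1 == r in   (* C meets A first *)
    let dAB := tailof A p in  (* arrow A -> B at crossing AB *)
    let dBC := tailof B q in
    let dCA := tailof C r in
    (dAB (+) fA (+) fB == dBC (+) fB (+) fC) /\
    (dBC (+) fB (+) fC == dCA (+) fC (+) fA) /\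
    let D1 := upd_comp D a.1 (swap2 (nth [::] D a.1) a.2) in
    let D2 := upd_comp D1 b.1 (swap2 (nth [::] D1 b.1) b.2) in
    D' = upd_comp D2 c.1 (swap2 (nth [::] D2 c.1) c.2).

Definition Rotstep (D D' : gdiag) : Prop :=
  exists i, i < size D /\ D' = upd_comp D i (rot 1 (nth [::] D i)).

Definition Permstep (D D' : gdiag) : Prop := perm_eq D D'.

Definition Relabstep (D D' : gdiag) : Prop :=
  exists f : nat -> nat, injective f /\ D' = [seq [seq (f l.1, l.2) | l <- s] | s <- D].

Definition fstep (D D' : gdiag) : Prop :=
  R1step D D' \/ R2step D D' \/ R3step D D' \/
  Rotstep D D' \/ Permstep D D' \/ Relabstep D D'.

Definition flat_equiv : gdiag -> gdiag -> Prop := clos_refl_sym_trans gdiag fstep.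

(* The braid word is drawn from top to bottom, strands oriented downwards;
   strands are identified by their top position.  At sigma_(i+1) the strand
   arriving at position i+1 carries the tail of the arrow, the one arriving
   at position i the head (positive-basis convention above).  The crossing
   label is the index of the letter in the word. *)
Definition swapn (pm : seq nat) (i : nat) : seq nat :=
  set_nth 0 (set_nth 0 pm i (nth 0 pm i.+1)) i.+1 (nth 0 pm i).

Definition push (L : seq (seq gletter)) (s : nat) (x : gletter) :=
  set_nth [::] L s (rcons (nth [::] L s) x).

Definition cl_step n (st : seq nat * seq (seq gletter)) (tg : nat * fvb_gen n) :=
  let: (pm, L) := st in
  let: (t, g) := tg in
  match g with
  | Sig i => let a := nth 0 pm i in let b := nth 0 pm i.+1 in
             (swapn pm i, push (push L b (t, true)) a (t, false))
  | Rho i => (swapn pm i, L)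
  end.

Definition cl_data n (w : seq (fvb_gen n)) :=
  foldl (@cl_step n) (iota 0 n, nseq n [::]) (zip (iota 0 (size w)) w).

Definition fvb_closure n (w : seq (fvb_gen n)) : gdiag :=
  let pmF := (cl_data w).1 in
  let L := (cl_data w).2 in
  (* strand s ends at bottom position (index s pmF), which is joined to the
     top of the strand starting at that position *)
  let nxt := fun s => index s pmF in
  let clen := fun s => (find (fun k => iter k.+1 nxt s == s) (iota 0 n)).+1 in
  let cyc := fun s => traject nxt s (clen s) in
  [seq flatten [seq nth [::] L j | j <- cyc s]
  | s <- iota 0 n & all (fun j => s <= j) (cyc s)].

(* Main.v *)
Require Import Defs.
From mathcomp Require Import all_boot all_algebra zify.
From Stdlib Require Import Setoid Morphisms Relation_Operators.
Set Implicit Arguments. Unset Strict Implicit. Unset Printing Implicit Defensive.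
Import GRing.Theory Num.Theory.

Section Grp.
Variable R : fword -> Prop.

Lemma greq_equiv : Equivalence (greq R).
Proof. split; [exact: greq_refl | exact: greq_sym | exact: greq_trans]. Qed.
End Grp.

Existing Instance greq_equiv.
#[global] Hint Resolve greq_refl : core.

Lemma greq_cat_l R p u v : greq R u v -> greq R (p ++ u) (p ++ v).
Proof.
elim=> {u v} [u|u v _ IH|u v w _ IH1 _ IH2|u v a|u v r Hr].
- reflexivity.
- by symmetry.
- by transitivity (p ++ v).
- by rewrite !catA; apply: greq_red.
- by rewrite catA [p ++ (u ++ v)]catA; apply: greq_rel.
Qed.

Lemma greq_cat_r R q u v : greq R u v -> greq R (u ++ q) (v ++ q).
Proof.
elim=> {u v} [u|u v _ IH|u v w _ IH1 _ IH2|u v a|u v r Hr].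
- reflexivity.
- by symmetry.
- by transitivity (v ++ q).
- by rewrite -!catA /= ; apply: greq_red.
- by rewrite -!catA; apply: greq_rel.
Qed.

#[global] Instance cat_greq_proper R : Proper (greq R ==> greq R ==> greq R) (@cat fletter).
Proof.
move=> u u' Hu v v' Hv; transitivity (u' ++ v).
  exact: greq_cat_r. exact: greq_cat_l.
Qed.

#[global] Instance cons_greq_proper R a : Proper (greq R ==> greq R) (cons a).
Proof. move=> u v H; exact: (greq_cat_l [:: a] H). Qed.

Lemma greq_relator R r : R r -> greq R r [::].
Proof. by move=> Hr; have := greq_rel (R:=R) [::] [::] Hr; rewrite /= cats0. Qed.

Lemma greq_mono (R R' : fword -> Prop) u v :
  (forall r, R r -> greq R' r [::]) -> greq R u v -> greq R' u v.
Proof.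
move=> HR; elim=> {u v} [u|u v _ IH|u v w _ IH1 _ IH2|u v a|u v r Hr].
- reflexivity.
- by symmetry.
- by transitivity v.
- exact: greq_red.
- rewrite (HR r Hr) /=; reflexivity.
Qed.

Definition linv (l : fletter) : fletter := (l.1, ~~ l.2).

Lemma greq_canc R u v (a : fletter) : greq R (u ++ a :: linv a :: v) (u ++ v).
Proof. exact: greq_red. Qed.

Lemma greq_canc0 R (a : fletter) : greq R [:: a; linv a] [::].
Proof. exact: (greq_red R [::] [::] a). Qed.

Lemma winv_cat u v : winv (u ++ v) = winv v ++ winv u.
Proof. by rewrite /winv map_cat rev_cat. Qed.

Lemma winv_cons l u : winv (l :: u) = winv u ++ [:: linv l].
Proof. by rewrite -cat1s winv_cat. Qed.

Lemma winvK u : winv (winv u) = u.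
Proof.
by rewrite /winv map_rev revK -map_comp map_id_in // => [[a b]] _ /=; rewrite negbK.
Qed.

Lemma winv_nil : winv [::] = [::]. Proof. by []. Qed.

Lemma greq_winvr R u : greq R (u ++ winv u) [::].
Proof.
elim: u => [|l u IH]; first reflexivity.
rewrite winv_cons cat_cons catA IH /=.
exact: greq_canc0.
Qed.

Lemma greq_winvl R u : greq R (winv u ++ u) [::].
Proof. by have := greq_winvr R (winv u); rewrite winvK. Qed.

Lemma greq_move R u v : greq R (u ++ winv v) [::] -> greq R u v.
Proof.
move=> H; transitivity (u ++ winv v ++ v).
  by rewrite greq_winvl cats0.
by rewrite catA H.
Qed.

Lemma greq_move' R u v : greq R u v -> greq R (u ++ winv v) [::].
Proof. by move=> ->; apply: greq_winvr. Qed.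

Lemma greq_winv R u v : greq R u v -> greq R (winv u) (winv v).
Proof.
move=> H; apply: greq_move; rewrite winvK.
rewrite -H; exact: greq_winvl.
Qed.

#[global] Instance winv_greq_proper R : Proper (greq R ==> greq R) winv.
Proof. move=> u v; exact: greq_winv. Qed.

Definition img (s : fgen -> fword) (l : fletter) := if l.2 then winv (s l.1) else s l.1.

Lemma subst_cat s u v : subst s (u ++ v) = subst s u ++ subst s v.
Proof. by rewrite /subst map_cat flatten_cat. Qed.

Lemma subst_cons s l u : subst s (l :: u) = img s l ++ subst s u.
Proof. by []. Qed.

Lemma subst_nil s : subst s [::] = [::]. Proof. by []. Qed.

Lemma subst1 s a : subst s [:: (a, false)] = s a.
Proof. by rewrite /subst /= cats0. Qed.

Lemma subst1i s a : subst s [:: (a, true)] = winv (s a).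
Proof. by rewrite /subst /= cats0. Qed.

Lemma img_linv s l : img s (linv l) = winv (img s l).
Proof. by case: l => a [] /=; rewrite /img /= ?winvK. Qed.

Lemma subst_winv s u : subst s (winv u) = winv (subst s u).
Proof.
elim: u => [|l u IH] //; rewrite winv_cons subst_cat IH subst_cons winv_cat.
by rewrite /subst /= cats0 img_linv.
Qed.

Lemma subst_comp s t u : subst t (subst s u) = subst (fun a => subst t (s a)) u.
Proof.
elim: u => [|[a b] u IH] //; rewrite !subst_cons subst_cat IH; congr (_ ++ _).
by case: b; rewrite /img //= subst_winv.
Qed.

Lemma subst_id u : subst (fun a => [:: (a, false)]) u = u.
Proof. by elim: u => [|[a b] u IH] //; rewrite subst_cons IH; case: b. Qed.

Lemma greq_subst (R R' : fword -> Prop) s u v :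
  (forall r, R r -> greq R' (subst s r) [::]) -> greq R u v -> greq R' (subst s u) (subst s v).
Proof.
move=> HR; elim=> {u v} [u|u v _ IH|u v w _ IH1 _ IH2|u v a|u v r Hr].
- reflexivity.
- by symmetry.
- by transitivity (subst s v).
- rewrite !subst_cat !subst_cons -/(linv a) img_linv (catA (img s a)) greq_winvr.
  by [].
- by rewrite !subst_cat (HR r Hr).
Qed.

Lemma valid_cat m u v : valid m (u ++ v) = valid m u && valid m v.
Proof. by rewrite /valid all_cat. Qed.

Lemma valid_winv m u : valid m (winv u) = valid m u.
Proof. by rewrite /valid all_rev all_map. Qed.

Lemma valid_subst m k s u : (forall a, a.2 < m -> valid k (s a)) -> valid m u ->
  valid k (subst s u).
Proof.
move=> Hs; elim: u => [|[a b] u IH] //= /andP [Ha Hu].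
rewrite subst_cons valid_cat IH // andbT /img /=; case: b => //=; rewrite ?valid_winv; exact: Hs.
Qed.

Lemma roundtrip (R : fword -> Prop) m s t u :
  (forall a, a.2 < m -> greq R (subst t (s a)) [:: (a, false)]) -> valid m u ->
  greq R (subst t (subst s u)) u.
Proof.
move=> H; elim: u => [|[a b] u IH] //= /andP [Ha Hu].
rewrite subst_cons subst_cat IH //; rewrite -cat1s; apply: cat_greq_proper => //.
case: b; rewrite /img /=; last exact: H.
rewrite subst_winv H //.
Qed.

Lemma pres_iso_sym n R n' R' : pres_iso n R n' R' -> pres_iso n' R' n R.
Proof.
case=> phi [psi [? [? [? [? [? ?]]]]]].
by exists psi, phi.
Qed.

Lemma pres_iso_trans n1 R1 n2 R2 n3 R3 :
  pres_iso n1 R1 n2 R2 -> pres_iso n2 R2 n3 R3 -> pres_iso n1 R1 n3 R3.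
Proof.
case=> phi1 [psi1 [V1 [W1 [A1 [B1 [C1 D1]]]]]].
case=> phi2 [psi2 [V2 [W2 [A2 [B2 [C2 D2]]]]]].
exists (fun a => subst phi2 (phi1 a)), (fun a => subst psi1 (psi2 a)).
split; [|split; [|split; [|split; [|split]]]].
- move=> a Ha; apply: valid_subst (V1 _ Ha); exact: V2.
- move=> a Ha; apply: valid_subst (W2 _ Ha); exact: W1.
- move=> r Hr; rewrite -(subst_comp phi1 phi2).
  have -> : [::] = subst phi2 [::] by [].
  apply: greq_subst A2 _; exact: A1.
- move=> r Hr; rewrite -(subst_comp psi2 psi1).
  have -> : [::] = subst psi1 [::] by [].
  apply: greq_subst B1 _; exact: B2.
- move=> a Ha; rewrite -(subst_comp psi2 psi1).
  transitivity (subst psi1 (phi1 a)); last exact: C1.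
  apply: greq_subst B1 _; apply: roundtrip C2 _; exact: V1.
- move=> a Ha; rewrite -(subst_comp phi1 phi2).
  transitivity (subst phi2 (psi2 a)); last exact: D2.
  apply: greq_subst A2 _; apply: roundtrip D1 _; exact: W2.
Qed.

Lemma pres_iso_id n R R' :
  (forall r, R r -> greq R' r [::]) -> (forall r, R' r -> greq R r [::]) ->
  pres_iso n R n R'.
Proof.
move=> H1 H2; exists (fun a => [:: (a, false)]), (fun a => [:: (a, false)]).
split; [|split; [|split; [|split; [|split]]]].
- by move=> a Ha; rewrite /valid /= Ha.
- by move=> a Ha; rewrite /valid /= Ha.
- by move=> r Hr; rewrite subst_id; apply: H1.
- by move=> r Hr; rewrite subst_id; apply: H2.
- by move=> a _; rewrite subst1.
- by move=> a _; rewrite subst1.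
Qed.

Definition X i : fletter := ((false, i), false).
Definition Xi i : fletter := ((false, i), true).
Definition Y i : fletter := ((true, i), false).
Definition Yi i : fletter := ((true, i), true).

Definition ypowj (j : nat) (z : int) : fword :=
  if (0 <= z)%R then nseq `|z| (Y j) else nseq `|z| (Yi j).
Definition ypow := ypowj 0.

Lemma winv_nseq (l : fletter) m : winv (nseq m l) = nseq m (linv l).
Proof. by rewrite /winv map_nseq rev_nseq. Qed.

Lemma winv_ypow j z : winv (ypowj j z) = ypowj j (- z)%R.
Proof.
have [->|nz] := eqVneq z 0%R; first by [].
rewrite /ypowj abszN; case: ifP => h1; rewrite winv_nseq; case: ifP => h2 //; exfalso; lia.
Qed.

Lemma ypowS R j z : greq R (ypowj j (1 + z)%R) ([:: Y j] ++ ypowj j z).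
Proof.
rewrite /ypowj; case: z => m.
- have -> : (1 + Posz m)%R = Posz m.+1 by [].
  by [].
- case: m => [|m].
  + have -> : (1 + Negz 0)%R = Posz 0 by [].
    by rewrite /= greq_canc0.
  + have -> : (1 + Negz m.+1)%R = Negz m by lia.
    have -> : (0 <= Negz m)%R = false by lia.
    have -> : (0 <= Negz m.+1)%R = false by lia.
    have -> : `|Negz m.+1|%N = `|Negz m|%N.+1 by lia.
    rewrite /=; symmetry; exact: (greq_red R [::] _ (Y j)).
Qed.

Lemma ypowN R j z : greq R (ypowj j (-1 + z)%R) ([:: Yi j] ++ ypowj j z).
Proof.
rewrite /ypowj; case: z => m.
- case: m => [|m].
  + by [].
  + have -> : (-1 + Posz m.+1)%R = Posz m by lia.
    rewrite /=; symmetry; exact: (greq_red R [::] _ (Yi j)).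
- have -> : (-1 + Negz m)%R = Negz m.+1 by lia.
  have -> : (0 <= Negz m)%R = false by lia.
  have -> : (0 <= Negz m.+1)%R = false by lia.
  have -> : `|Negz m.+1|%N = `|Negz m|%N.+1 by lia.
  by [].
Qed.

Lemma ypow_add R j a b : greq R (ypowj j (a + b)%R) (ypowj j a ++ ypowj j b).
Proof.
case: a => m.
- elim: m => [|m IH]; first by rewrite add0r.
  have -> : (Posz m.+1 + b = 1 + (Posz m + b))%R by lia.
  rewrite ypowS IH.
  have -> : ypowj j (Posz m.+1) = [:: Y j] ++ ypowj j (Posz m) by [].
  by rewrite catA.
- elim: m => [|m IH].
  + have -> : (Negz 0 + b = -1 + b)%R by lia.
    by rewrite ypowN.
  + have -> : (Negz m.+1 + b = -1 + (Negz m + b))%R by lia.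
    rewrite ypowN IH.
    have -> : ypowj j (Negz m.+1) = [:: Yi j] ++ ypowj j (Negz m).
      rewrite /ypowj; have -> : `|Negz m.+1|%N = `|Negz m|%N.+1 by lia. by [].
    by rewrite catA.
Qed.

Definition RY n (r : fword) : Prop := exists i, i.+1 < n /\ r = [:: Y i; Yi i.+1].

Section Yrel.
Variables (n : nat) (R : fword -> Prop).
Hypothesis HY : forall r, RY n r -> greq R r [::].

Lemma Yeq0 i : i < n -> greq R [:: Y i] [:: Y 0].
Proof.
elim: i => [|i IH] Hi; first by [].
rewrite -IH; last lia.
symmetry; apply: greq_move; apply: HY; exists i; split=> //.
Qed.

Lemma Yeq i j : i < n -> j < n -> greq R [:: Y i] [:: Y j].
Proof. by move=> Hi Hj; rewrite Yeq0 // (Yeq0 Hj). Qed.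

Lemma Yieq i j : i < n -> j < n -> greq R [:: Yi i] [:: Yi j].
Proof. by move=> Hi Hj; have := greq_winv (Yeq Hi Hj). Qed.

Lemma ypowj_eq i j z : i < n -> j < n -> greq R (ypowj i z) (ypowj j z).
Proof.
move=> Hi Hj; rewrite /ypowj; case: ifP => _; elim: `|z|%N => [|m IH] //=.
- by rewrite -cat1s IH (Yeq Hi Hj).
- by rewrite -cat1s IH (Yieq Hi Hj).
Qed.

Lemma YYi i j : i < n -> j < n -> greq R [:: Y i; Yi j] [::].
Proof. by move=> Hi Hj; rewrite -cat1s (Yeq Hi Hj) /=; exact: greq_canc0. Qed.
End Yrel.

Lemma RY_RY n r : RY n r -> greq (RY n) r [::].
Proof. exact: greq_relator. Qed.

Lemma subst_ypow s j0 j z : s (true, j0) = [:: Y j] -> subst s (ypowj j0 z) = ypowj j z.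
Proof.
move=> Hs; rewrite /ypowj; case: ifP => _; elim: `|z|%N => [|m IH] //=.
- by rewrite subst_cons IH /img /= Hs.
- by rewrite subst_cons IH /img /= Hs.
Qed.

Definition tstep n (pk : nat * int) (g : fvb_gen n) : nat * int :=
  let: (p, k) := pk in
  match g with
  | Sig i => if p == i then (i.+1, (k + 1)%R)
             else if p == i.+1 then (nat_of_ord i, (k - 1)%R) else (p, k)
  | Rho i => (if p == i then i.+1 else if p == i.+1 then nat_of_ord i else p, k)
  end.

Definition track n (w : seq (fvb_gen n)) (i : nat) : nat * int := foldl (@tstep n) (i, 0%R) w.

Lemma theta_rcons n (w : seq (fvb_gen n)) g a :
  theta (rcons w g) a = subst (theta_gen g) (theta w a).
Proof. by rewrite /theta foldl_rcons. Qed.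

Lemma theta_gen_y n (g : fvb_gen n) a : a < n ->
  exists a', a' < n /\ theta_gen g (true, a) = [:: Y a'].
Proof.
move=> Ha; case: g => i /=.
- by exists a.
- have Hi := ltn_ord i.
  exists (if a == i then i.+1 else if a == i.+1 then nat_of_ord i else a); split=> //.
  case: eqP => _; first lia. case: eqP => _; lia.
Qed.

Lemma theta_gen_RY n (g : fvb_gen n) r : RY n r -> greq (RY n) (subst (theta_gen g) r) [::].
Proof.
case=> i [Hi ->].
have [a1 [H1 E1]] := theta_gen_y g (ltnW Hi).
have [a2 [H2 E2]] := theta_gen_y g Hi.
rewrite subst_cons /img /= E1 subst1i E2 /=.
exact: (YYi (@RY_RY n) H1 H2).
Qed.

Lemma theta_y n (w : seq (fvb_gen n)) i : i < n ->
  exists j, j < n /\ theta w (true, i) = [:: Y j].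
Proof.
move=> Hi; elim/last_ind: w => [|w g [j [Hj E]]]; first by exists i.
rewrite theta_rcons E subst1.
exact: theta_gen_y.
Qed.

Lemma theta_x n (w : seq (fvb_gen n)) i :
  greq (RY n) (theta w (false, i)) ([:: X (track w i).1] ++ ypow (track w i).2).
Proof.
elim/last_ind: w => [|w g IH]; first by [].
rewrite theta_rcons /track foldl_rcons -/(track w i).
case: (track w i) IH => p k IH.
rewrite (greq_subst (@theta_gen_RY n g) IH) subst_cat subst1.
have n0 : 0 < n by case: g => j; have := ltn_ord j; lia.
have [j [Hj Ej]] := theta_gen_y g n0.
rewrite /ypow (subst_ypow _ Ej) (ypowj_eq _ _ Hj n0); last exact: RY_RY.
case: g Ej => i' Ej /=; have Hi := ltn_ord i'.
- case: eqP => _.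
    rewrite /=; apply: cons_greq_proper.
    rewrite addrC ypowS.
    change (greq (RY n) ([:: Y i'.+1] ++ ypowj 0 k) ([:: Y 0] ++ ypowj 0 k)).
    apply: cat_greq_proper => //; apply: (Yeq (@RY_RY n)); lia.
  case: eqP => _ //=.
  apply: cons_greq_proper.
  rewrite addrC ypowN.
  change (greq (RY n) ([:: Yi i'.+1] ++ ypowj 0 k) ([:: Yi 0] ++ ypowj 0 k)).
  apply: cat_greq_proper => //; apply: (Yieq (@RY_RY n)); lia.
- by [].
Qed.

Definition Std n (tau : nat -> nat) (kk : nat -> int) (r : fword) : Prop :=
  (exists i, i < n /\ r = [:: X (tau i)] ++ ypow (kk i) ++ [:: Xi i]) \/ RY n r.

Lemma Std_RY n tau kk r : RY n r -> greq (Std n tau kk) r [::].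
Proof. by move=> H; apply: greq_relator; right. Qed.

Lemma Grel_RY n (w : seq (fvb_gen n)) r : RY n r -> greq (Grel w) r [::].
Proof.
case=> i [Hi ->]; apply: greq_relator; exists i; split; first lia.
by right; right.
Qed.

Lemma Grel_Std n (w : seq (fvb_gen n)) :
  pres_iso n (Grel w) n (Std n (fun i => (track w i).1) (fun i => (track w i).2)).
Proof.
apply: pres_iso_id.
- move=> r [i [Hi [->|[->|[Hi1 ->]]]]].
  + rewrite (greq_mono (@Std_RY n _ _) (theta_x w i)).
    apply: greq_relator; left; exists i; split=> //.
  + have [j [Hj ->]] := theta_y w Hi.
    exact: (YYi (@Std_RY n _ _) Hj Hi).
  + by apply: Std_RY; exists i.
- move=> r [[i [Hi ->]]|HY]; last exact: Grel_RY.
  transitivity (theta w (false, i) ++ [:: Xi i]).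
    by rewrite (greq_mono (@Grel_RY n w) (theta_x w i)) -catA.
  by apply: greq_relator; exists i; split=> //; left.
Qed.

Definition cnt (l : seq gletter) : int :=
  ((count (fun x : gletter => ~~ x.2) l)%:Z - (count (fun x : gletter => x.2) l)%:Z)%R.

Lemma cnt_cat l1 l2 : cnt (l1 ++ l2) = (cnt l1 + cnt l2)%R.
Proof. rewrite /cnt !count_cat; lia. Qed.

Lemma cnt_rcons l x : cnt (rcons l x) = (cnt l + (if x.2 then -1 else 1))%R.
Proof. rewrite -cats1 cnt_cat; case: x => a [] /=; rewrite /cnt /=; lia. Qed.

Lemma cnt_nil : cnt [::] = 0%R. Proof. by []. Qed.

Lemma eqnSF i : (i == i.+1) = false.
Proof. by apply/eqP; lia. Qed.
Lemma eqSnF i : (i.+1 == i) = false.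
Proof. by apply/eqP; lia. Qed.

Lemma nth_swapn pm i q : nth 0 (swapn pm i) q =
  if q == i.+1 then nth 0 pm i else if q == i then nth 0 pm i.+1 else nth 0 pm q.
Proof.
rewrite /swapn !nth_set_nth /=; case: (q =P i.+1) => // _.
by rewrite nth_set_nth.
Qed.

Lemma size_swapn pm i : i.+1 < size pm -> size (swapn pm i) = size pm.
Proof. move=> H; rewrite /swapn !size_set_nth; lia. Qed.

Lemma nth_push L s x j : nth [::] (push L s x) j =
  if j == s then rcons (nth [::] L s) x else nth [::] L j.
Proof. by rewrite /push nth_set_nth. Qed.

Lemma cl_data_rcons n (w : seq (fvb_gen n)) g :
  cl_data (rcons w g) = cl_step (cl_data w) (size w, g).
Proof.
rewrite /cl_data size_rcons -addn1 iotaD add0n /= cats1 zip_rcons ?size_iota //.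
by rewrite foldl_rcons.
Qed.

Lemma cl_inv n (w : seq (fvb_gen n)) :
  size (cl_data w).1 = n /\ forall s, s < n ->
    [/\ (track w s).1 < n, nth 0 (cl_data w).1 (track w s).1 = s &
        cnt (nth [::] (cl_data w).2 s) = (track w s).2].
Proof.
elim/last_ind: w => [|w g [IHs IH]].
  split; first by rewrite size_iota.
  move=> s Hs; rewrite /track /=; split=> //; first by rewrite nth_iota.
  by rewrite nth_nseq; case: ifP.
rewrite cl_data_rcons.
case: (cl_data w) IHs IH => pm L /= IHs IH.
have Hu : uniq pm.
  apply: (@leq_size_uniq _ (iota 0 n)); first exact: iota_uniq.
    move=> x; rewrite mem_iota /= => Hx; have [H1 H2 _] := IH x Hx.
    by rewrite -H2 mem_nth // IHs.
  by rewrite IHs size_iota.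
have ne : forall p q, p < n -> q < n -> (nth 0 pm p == nth 0 pm q) = (p == q).
  by move=> p q Hp Hq; rewrite nth_uniq // IHs.
have Hg : forall s, track (rcons w g) s = tstep (track w s) g.
  by move=> s; rewrite /track foldl_rcons.
case: g Hg => i Hg; have Hi := ltn_ord i; (have Hin : i.+1 < n by lia);
  (split; first by rewrite size_swapn // IHs);
  move=> s Hs; rewrite Hg; have [H1 H2 H3] := IH s Hs;
  case: (track w s) H1 H2 H3 => p k /= H1 H2 H3.
- subst s.
  have nab : (nth 0 pm i == nth 0 pm i.+1) = false.
    by rewrite ne //; try lia; apply/eqP; lia.
  have nba : (nth 0 pm i.+1 == nth 0 pm i) = false by rewrite eq_sym.
  case: (p =P i) => [Ep|Np].
    subst p; split=> //; rewrite ?nth_swapn ?eqxx //.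
    rewrite nth_push eqxx nth_push cnt_rcons nab H3 /=; lia.
  case: (p =P i.+1) => [Ep|Np'].
    subst p; split=> //=; first lia.
      by rewrite nth_swapn eqnSF eqxx.
    rewrite nth_push nba.
    by rewrite nth_push eqxx cnt_rcons H3.
  split=> //.
    rewrite nth_swapn; case: (p =P i.+1) => // _; case: (p =P i) => // _.
  rewrite !nth_push !ne //; try lia.
  by rewrite ?(introF eqP Np) ?(introF eqP Np').
- subst s; case: (p =P i) => [Ep|Np].
    subst p; split=> //; by rewrite ?nth_swapn ?eqxx.
  case: (p =P i.+1) => [Ep|Np'].
    subst p; split=> //=; first lia.
    by rewrite nth_swapn eqnSF eqxx.
  split=> //.
  rewrite nth_swapn; case: (p =P i.+1) => // _; case: (p =P i) => // _.
Qed.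

Lemma cl_index n (w : seq (fvb_gen n)) s : s < n ->
  index s (cl_data w).1 = (track w s).1 /\ cnt (nth [::] (cl_data w).2 s) = (track w s).2.
Proof.
move=> Hs; have [Hsz IH] := cl_inv w; have [H1 H2 H3] := IH s Hs.
split=> //.
have Hu : uniq (cl_data w).1.
  apply: (@leq_size_uniq _ (iota 0 n)); first exact: iota_uniq.
    move=> x; rewrite mem_iota /= => Hx; have [G1 G2 _] := IH x Hx.
    by rewrite -G2 mem_nth // Hsz.
  by rewrite Hsz size_iota.
by rewrite -{1}H2 index_uniq // Hsz.
Qed.

Lemma size_upd D i t : i < size D -> size (upd_comp D i t) = size D.
Proof. move=> H; rewrite /upd_comp size_set_nth; lia. Qed.

Lemma nth_upd D i t j : nth [::] (upd_comp D i t) j = if j == i then t else nth [::] D j.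
Proof. by rewrite /upd_comp nth_set_nth. Qed.

Lemma upd_inv D i t : i < size D -> cnt t = cnt (nth [::] D i) ->
  map cnt (upd_comp D i t) = map cnt D.
Proof.
move=> Hi Ht; apply: (@eq_from_nth _ 0%R); first by rewrite !size_map size_upd.
move=> j; rewrite size_map size_upd // => Hj.
rewrite (nth_map [::]) ?size_upd // (nth_map [::]) // nth_upd.
by case: eqP => // ->.
Qed.

Lemma cnt_ins s p x : cnt (ins_at s p x) = (cnt s + cnt x)%R.
Proof.
have := cnt_cat (take p s) (drop p s); rewrite cat_take_drop => ->.
rewrite /ins_at !cnt_cat; lia.
Qed.

Lemma swap2_dec s p : p.+1 < size s ->
  s = take p s ++ [:: nth (0, false) s p; nth (0, false) s p.+1] ++ drop p.+2 s.
Proof.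
move=> H; rewrite -{1}(cat_take_drop p s) (drop_nth (0, false)); last lia.
by rewrite (drop_nth (0, false)).
Qed.

Lemma cnt_swap2 s p : p.+1 < size s -> cnt (swap2 s p) = cnt s.
Proof.
move=> H; have E := swap2_dec H; rewrite /swap2.
set a := nth _ s p; set b := nth _ s p.+1.
transitivity (cnt (take p s ++ [:: a; b] ++ drop p.+2 s)); last by rewrite -E.
rewrite !cnt_cat; congr (_ + _)%R; congr (_ + _)%R.
by case: (a) (b) => [? []] [? []].
Qed.

Lemma size_swap2 s p : p.+1 < size s -> size (swap2 s p) = size s.
Proof.
move=> H; have E := swap2_dec H; rewrite /swap2.
transitivity (size (take p s ++ [:: nth (0, false) s p; nth (0, false) s p.+1] ++ drop p.+2 s)); last by rewrite -E.
by rewrite !size_cat.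
Qed.

Lemma upd_swap D i p : i < size D -> p.+1 < size (nth [::] D i) ->
  let D1 := upd_comp D i (swap2 (nth [::] D i) p) in
  [/\ map cnt D1 = map cnt D, size D1 = size D &
      forall j, size (nth [::] D1 j) = size (nth [::] D j)].
Proof.
move=> Hi Hp /=; split.
- by apply: upd_inv => //; rewrite cnt_swap2.
- by rewrite size_upd.
- by move=> j; rewrite nth_upd; case: eqP => // ->; rewrite size_swap2.
Qed.

Lemma cnt_rot s : cnt (rot 1 s) = cnt s.
Proof.
have := cnt_cat (take 1 s) (drop 1 s); rewrite cat_take_drop => ->.
by rewrite /rot cnt_cat addrC.
Qed.

Lemma fstep_inv D D' : fstep D D' -> perm_eq (map cnt D) (map cnt D').
Proof.
case=> [|[|[|[|[|]]]]].
- case=> i [p [c [b [Hi [_ ->]]]]].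
  rewrite upd_inv // cnt_ins.
  have -> : cnt [:: (c, b); (c, ~~ b)] = 0%R by case: b.
  by rewrite addr0.
- case=> i [p [j [q [c [d [ba [antipar [_ [_ [_ [Hi [Hj [_ ->]]]]]]]]]]]]].
  set D1 := upd_comp D i _.
  have E1 : map cnt D1 = map cnt D.
    rewrite upd_inv // cnt_ins.
    have -> : cnt [:: (c, ba); (d, ~~ ba)] = 0%R by case: (ba).
    by rewrite addr0.
  have S1 : size D1 = size D by rewrite size_upd.
  rewrite upd_inv ?S1 ?E1 // cnt_ins.
  have -> : cnt (if antipar then [:: (d, ba); (c, ~~ ba)] else [:: (c, ~~ ba); (d, ba)]) = 0%R.
    by case: (antipar); case: (ba).
  by rewrite addr0.
- case=> a [b [c [p [q [r [/and5P [Ha Hb Hc _ _] [_ HH]]]]]]].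
  move: HH => [_ [_ [_ [_ [_ ->]]]]].
  move: Ha Hb Hc; rewrite /cl_ok => /andP [Ha1 Ha2] /andP [Hb1 Hb2] /andP [Hc1 Hc2].
  have [E1 S1 N1] := upd_swap Ha1 Ha2.
  set D1 := upd_comp D a.1 _.
  have Hb1' : b.1 < size D1 by rewrite S1.
  have Hb2' : b.2.+1 < size (nth [::] D1 b.1) by rewrite N1.
  have [E2 S2 N2] := upd_swap Hb1' Hb2'.
  set D2 := upd_comp D1 b.1 _.
  have Hc1' : c.1 < size D2 by rewrite S2 S1.
  have Hc2' : c.2.+1 < size (nth [::] D2 c.1) by rewrite N2 N1.
  have [E3 _ _] := upd_swap Hc1' Hc2'.
  by rewrite E3 E2 E1.
- case=> i [Hi ->]; by rewrite upd_inv // cnt_rot.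
- by move=> H; rewrite perm_map.
- case=> f [_ ->]; rewrite -map_comp.
  have -> : [seq (cnt \o (fun s : seq gletter => [seq (f l.1, l.2) | l <- s])) i | i <- D] = map cnt D.
    by apply: eq_map => s /=; rewrite /cnt !count_map.
  exact: perm_refl.
Qed.

Lemma flat_equiv_inv D D' : flat_equiv D D' -> perm_eq (map cnt D) (map cnt D').
Proof.
elim=> [x y H|x|x y _ IH|x y z _ IH1 _ IH2].
- exact: fstep_inv.
- by [].
- by rewrite perm_sym.
- exact: perm_trans IH1 IH2.
Qed.

Lemma find_nthP (T : Type) (P : pred T) x0 s m : m < size s -> P (nth x0 s m) ->
  (forall k, k < m -> ~~ P (nth x0 s k)) -> find P s = m.
Proof.
move=> Hm HP Hk.
have Hh : has P s by apply/(has_nthP x0); exists m.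
case: (ltngtP (find P s) m) => H //.
- by have := Hk _ H; rewrite nth_find.
- by have := before_find x0 H; rewrite HP.
Qed.

Definition clenN n (nxt : nat -> nat) s :=
  (find (fun k => iter k.+1 nxt s == s) (iota 0 n)).+1.
Definition cycN n nxt s := traject nxt s (clenN n nxt s).
Definition repsN n nxt := [seq s <- iota 0 n | all (fun j => s <= j) (cycN n nxt s)].

Definition Can c (Ks : seq int) (r : fword) : Prop :=
  (exists2 K, K \in Ks & r = ypow K) \/ RY c r.

Lemma traject_map (T : Type) (f : T -> T) x m :
  traject f x m = map (fun t => iter t f x) (iota 0 m).
Proof.
elim: m x => //= m IH x; rewrite IH; congr (_ :: _).
rewrite -[1]/(1 + 0) iotaDl -map_comp; apply: eq_map => t /=.
by rewrite add0n -iterS iterSr.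
Qed.

Lemma valid_ypow c z : 0 < c -> valid c (ypow z).
Proof. by move=> H; rewrite /valid /ypow /ypowj; case: ifP => _; apply/allP => l /nseqP [-> _]. Qed.

Lemma ypow0 : ypow 0 = [::]. Proof. by []. Qed.

Section Cyc.
Variables (n : nat) (nxt : nat -> nat).
Hypothesis nlt : forall s, s < n -> nxt s < n.
Hypothesis ninj : forall s t, s < n -> t < n -> nxt s = nxt t -> s = t.

Local Notation clen := (clenN n nxt).
Local Notation cyc := (cycN n nxt).
Local Notation reps := (repsN n nxt).

Definition fo (i : 'I_n) : 'I_n := Ordinal (nlt (ltn_ord i)).

Lemma fo_inj : injective fo.
Proof. move=> i j /(congr1 val) /= H; apply: val_inj; exact: (ninj (ltn_ord i) (ltn_ord j) H). Qed.

Lemma iter_fo k (i : 'I_n) : val (iter k fo i) = iter k nxt i.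
Proof. by elim: k => //= k ->. Qed.

Lemma iter_lt k s : s < n -> iter k nxt s < n.
Proof. by move=> Hs; elim: k => //= k IH; apply: nlt. Qed.

Lemma map_traject_fo m (i : 'I_n) : map val (traject fo i m) = traject nxt i m.
Proof. by elim: m i => //= m IH i; rewrite IH. Qed.

Lemma clen_order (i : 'I_n) : clen i = fingraph.order fo i.
Proof.
rewrite /clenN -(orderSpred fo i); congr _.+1.
have Hord : fingraph.order fo i <= n by rewrite -[X in _ <= X]card_ord; exact: max_card.
have Hi0 := ltn_ord i.
have Hu := orbit_uniq fo i.
apply: (@find_nthP _ _ 0); rewrite ?size_iota; first lia.
- rewrite nth_iota /= ?add0n; last lia.
    by rewrite -iterS -iter_fo orderSpred iter_order //; apply: fo_inj.
- move=> k Hk; rewrite nth_iota /= ?add0n; last lia.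
  rewrite -iter_fo; apply/negP => /eqP E.
  have E' : iter k.+1 fo i = i by apply: val_inj.
  have Hk1 : k.+1 < fingraph.order fo i by lia.
  have := @nth_uniq _ i (orbit fo i) k.+1 0.
  rewrite size_orbit Hk1 order_gt0 Hu => /(_ isT isT isT).
  rewrite /orbit !nth_traject ?order_gt0 //.
  by rewrite E' eqxx.
Qed.

Lemma cyc_orbit (i : 'I_n) : cyc i = map val (orbit fo i).
Proof. by rewrite /cycN /orbit map_traject_fo clen_order. Qed.

Lemma mem_cyc (i j : 'I_n) : (val j \in cyc i) = fconnect fo i j.
Proof. by rewrite cyc_orbit (mem_map val_inj) fconnect_orbit. Qed.

Lemma cyc_lt s j : j \in cyc s -> s < n -> j < n.
Proof. by move=> /trajectP [k _ ->] Hs; apply: iter_lt. Qed.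

Lemma size_cyc s : size (cyc s) = clen s.
Proof. by rewrite size_traject. Qed.

Lemma nth_cyc s t : t < clen s -> nth 0 (cyc s) t = iter t nxt s.
Proof. by move=> H; rewrite /cycN (set_nth_default s) ?size_traject // nth_traject. Qed.

Lemma uniq_cyc s : s < n -> uniq (cyc s).
Proof.
move=> Hs; have -> : s = val (Ordinal Hs) by [].
rewrite cyc_orbit (map_inj_uniq val_inj); exact: orbit_uniq.
Qed.

Lemma iter_clen s : s < n -> iter (clen s) nxt s = s.
Proof.
move=> Hs; have -> : s = val (Ordinal Hs) by [].
by rewrite clen_order -iter_fo iter_order //; apply: fo_inj.
Qed.

Lemma in_cyc s : s \in cyc s.
Proof. by rewrite /cycN /clenN /= mem_head. Qed.

Lemma mem_reps s : (s \in reps) = (s < n) && all (fun j => s <= j) (cyc s).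
Proof. by rewrite /repsN mem_filter mem_iota andbC. Qed.

Lemma reps_lt s : s \in reps -> s < n.
Proof. by rewrite mem_reps => /andP []. Qed.

Lemma uniq_reps : uniq reps.
Proof. by rewrite /repsN filter_uniq // iota_uniq. Qed.

Lemma reps_ex i : i < n -> exists2 s, s \in reps & i \in cyc s.
Proof.
move=> Hi.
have ex : exists m, m \in cyc i by exists i; exact: in_cyc.
case: (ex_minnP ex) => s Hs Hmin.
have Hsn : s < n := cyc_lt Hs Hi.
have C : fconnect fo (Ordinal Hi) (Ordinal Hsn).
  by rewrite -mem_cyc.
exists s.
  rewrite mem_reps Hsn andTb; apply/allP => j Hj.
  have Hjn : j < n := cyc_lt Hj Hsn.
  apply: Hmin; change (val (Ordinal Hjn) \in cyc (val (Ordinal Hi))).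
  rewrite mem_cyc; apply: connect_trans C _.
  by rewrite -mem_cyc.
change (val (Ordinal Hi) \in cyc (val (Ordinal Hsn))).
by rewrite mem_cyc fconnect_sym //; apply: fo_inj.
Qed.

Lemma cyc_nxt s i : s < n -> i < n -> (nxt i \in cyc s) = (i \in cyc s).
Proof.
move=> Hs Hi.
change ((val (fo (Ordinal Hi)) \in cyc (val (Ordinal Hs))) = (val (Ordinal Hi) \in cyc (val (Ordinal Hs)))).
rewrite !mem_cyc -same_fconnect1_r //; apply: fo_inj.
Qed.

Lemma reps_uniq s s' x : s \in reps -> s' \in reps -> x \in cyc s -> x \in cyc s' -> s = s'.
Proof.
move=> Hs Hs' Hx Hx'.
have Hsn := reps_lt Hs; have Hsn' := reps_lt Hs'.
have Hxn : x < n := cyc_lt Hx Hsn.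
have C : fconnect fo (Ordinal Hsn) (Ordinal Hsn').
  apply: connect_trans (_ : fconnect fo _ (Ordinal Hxn)) _.
    by rewrite -mem_cyc.
  by rewrite fconnect_sym; [rewrite -mem_cyc | apply: fo_inj].
have C' : fconnect fo (Ordinal Hsn') (Ordinal Hsn) by rewrite fconnect_sym //; apply: fo_inj.
move: C C'; rewrite -!mem_cyc /= => C C'.
move: Hs Hs'; rewrite !mem_reps => /andP [_ /allP A] /andP [_ /allP A'].
have := A _ C; have := A' _ C'; lia.
Qed.

Definition comp i := find (fun s => i \in cyc s) reps.
Definition rep i := nth 0 reps (comp i).

Lemma comp_lt i : i < n -> comp i < size reps.
Proof.
move=> Hi; rewrite -has_find; have [s Hs Hc] := reps_ex Hi.
by apply/hasP; exists s.
Qed.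

Lemma rep_in i : i < n -> rep i \in reps.
Proof. by move=> Hi; rewrite /rep mem_nth // comp_lt. Qed.

Lemma in_cyc_rep i : i < n -> i \in cyc (rep i).
Proof.
move=> Hi; rewrite /rep /comp; apply: (nth_find 0 (a := fun s => i \in cyc s)).
by have [s Hs Hc] := reps_ex Hi; apply/hasP; exists s.
Qed.

Lemma comp_nxt i : i < n -> comp (nxt i) = comp i.
Proof.
move=> Hi; apply: eq_in_find => s Hs /=; apply: cyc_nxt => //; exact: reps_lt.
Qed.

Lemma comp_nth j : j < size reps -> comp (nth 0 reps j) = j.
Proof.
move=> Hj; apply: find_nthP => //=; first exact: in_cyc.
move=> k Hk; apply/negP => H.
have Hk' : k < size reps by lia.
have /eqP := reps_uniq (mem_nth 0 Hk') (mem_nth 0 Hj) H (in_cyc _).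
rewrite nth_uniq ?uniq_reps // => /eqP; lia.
Qed.

Lemma rep_nth j : j < size reps -> rep (nth 0 reps j) = nth 0 reps j.
Proof. by move=> Hj; rewrite /rep comp_nth. Qed.

Lemma reps_gt0 : 0 < n -> 0 < size reps.
Proof. by move=> H; have := comp_lt H; lia. Qed.


Variable kk : nat -> int.

Definition sumk s m : int := (\sum_(0 <= t < m) kk (iter t nxt s))%R.
Definition idx i := index i (cyc (rep i)).
Definition off i : int := (- sumk (rep i) (idx i))%R.
Definition Ks := [seq (\sum_(j <- cyc s) kk j)%R | s <- reps].

Lemma sum_cyc s : (\sum_(j <- cyc s) kk j)%R = sumk s (clen s).
Proof. by rewrite /cycN traject_map big_map /sumk /index_iota subn0. Qed.

Lemma sumkS s m : sumk s m.+1 = (sumk s m + kk (iter m nxt s))%R.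
Proof. by rewrite /sumk big_nat_recr. Qed.

Lemma sumk0 s : sumk s 0 = 0%R.
Proof. by rewrite /sumk big_geq. Qed.

Lemma idx_lt i : i < n -> idx i < clen (rep i).
Proof. by move=> Hi; rewrite /idx -size_cyc index_mem in_cyc_rep. Qed.

Lemma iter_idx i : i < n -> iter (idx i) nxt (rep i) = i.
Proof. by move=> Hi; rewrite -nth_cyc ?idx_lt // nth_index // in_cyc_rep. Qed.

Lemma rep_lt i : i < n -> rep i < n.
Proof. by move=> Hi; apply: reps_lt; apply: rep_in. Qed.

Lemma rep_nxt i : i < n -> rep (nxt i) = rep i.
Proof. by move=> Hi; rewrite /rep comp_nxt. Qed.

Lemma off_nxt i : i < n ->
  (off (nxt i) + kk i - off i = 0)%R \/ (off (nxt i) + kk i - off i = sumk (rep i) (clen (rep i)))%R.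
Proof.
move=> Hi; have Hs := rep_lt Hi; have Ha := idx_lt Hi; have Ei := iter_idx Hi.
rewrite /off rep_nxt //.
set s := rep i in Hs Ha Ei *; set a := idx i in Ha Ei *.
have [Hlt|Heq] : a.+1 < clen s \/ a.+1 = clen s by lia.
- left.
  have -> : idx (nxt i) = a.+1.
    rewrite /idx rep_nxt // -/s -Ei -iterS -nth_cyc // index_uniq ?size_cyc //.
    exact: uniq_cyc.
  rewrite sumkS Ei; lia.
- right.
  have -> : idx (nxt i) = 0.
    rewrite /idx rep_nxt // -/s -Ei -iterS Heq iter_clen //.
    by rewrite /cycN /clenN /= eqxx.
  rewrite -Heq sumkS Ei sumk0; lia.
Qed.

Local Notation RS := (Std n nxt kk).

Lemma chain s m : s < n -> greq RS [:: X (iter m nxt s)] ([:: X s] ++ ypow (- sumk s m)%R).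
Proof.
move=> Hs; elim: m => [|m IH]; first by rewrite sumk0 oppr0.
have Hx : iter m nxt s < n by apply: iter_lt.
have R1 : greq RS [:: X (nxt (iter m nxt s))] ([:: X (iter m nxt s)] ++ ypow (- kk (iter m nxt s))%R).
  apply: greq_move; rewrite winv_cat winv_ypow opprK /=.
  by apply: greq_relator; left; exists (iter m nxt s).
rewrite /= R1 IH -catA sumkS opprD /ypow -ypow_add.
reflexivity.
Qed.

Lemma yK s : s < n -> greq RS (ypow (sumk s (clen s))) [::].
Proof.
move=> Hs; have := chain (clen s) Hs; rewrite iter_clen // => H.
have H2 : greq RS (ypow (- sumk s (clen s))%R) [::].
  transitivity ([:: Xi s] ++ ([:: X s] ++ ypow (- sumk s (clen s))%R)).
    symmetry; exact: (greq_red RS [::] _ (Xi s)).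
  by rewrite -H; exact: greq_canc0.
by have := greq_winv H2; rewrite winv_ypow opprK.
Qed.

Definition phiC (a : fgen) : fword :=
  if a.1 then [:: Y 0] else [:: X (comp a.2)] ++ ypow (off a.2).
Definition psiC (a : fgen) : fword :=
  if a.1 then [:: Y 0] else [:: X (nth 0 reps a.2)].

Lemma Can_RY c Ks' r : RY c r -> greq (Can c Ks') r [::].
Proof. by move=> H; apply: greq_relator; right. Qed.

Lemma std_can : 0 < n -> pres_iso n RS (size reps) (Can (size reps) Ks).
Proof.
move=> n0; have c0 := reps_gt0 n0.
exists phiC, psiC.
split; [|split; [|split; [|split; [|split]]]].
- move=> [[] i] Hi; rewrite /= in Hi; first by rewrite /phiC /valid /= c0.
  by rewrite /phiC valid_cat valid_ypow // /valid /= andbT comp_lt.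
- move=> [[] j] /= Hj; first by rewrite /valid /= n0.
  by rewrite /valid /= andbT; apply: reps_lt; apply: mem_nth.
- move=> r [[i [Hi ->]]|[i [Hi ->]]]; last first.
    rewrite subst_cons subst1i /img /=; exact: greq_canc0.
  rewrite !subst_cat subst1 subst1i /ypow (subst_ypow (j := 0)) //.
  rewrite /phiC /= comp_nxt // winv_cons winv_ypow.
  set j := comp i.
  transitivity ([:: X j] ++ ypow (off (nxt i) + kk i - off i)%R ++ [:: Xi j]).
    rewrite /ypow !ypow_add -!catA /=; reflexivity.
  have HE : greq (Can (size reps) Ks) (ypow (off (nxt i) + kk i - off i)%R) [::].
    case: (off_nxt Hi) => ->; first by [].
    apply: greq_relator; left; exists (sumk (rep i) (clen (rep i))) => //.
    by apply/mapP; exists (rep i); [apply: rep_in | rewrite sum_cyc].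
  rewrite HE /=; exact: greq_canc0.
- move=> r [[K HK ->]|[i [Hi ->]]]; last first.
    rewrite subst_cons subst1i /img /=; exact: greq_canc0.
  rewrite /ypow (subst_ypow (j := 0)) //.
  case/mapP: HK => s Hs ->; rewrite sum_cyc; apply: yK; exact: reps_lt.
- move=> [[] i] Hi; rewrite /= in Hi.
    rewrite /phiC /= subst1 /psiC /=.
    by apply: (Yeq (@Std_RY n nxt kk)).
  rewrite /phiC /= subst_cons /img /= /psiC /= /ypow (subst_ypow (j := 0)) //.
  have := chain (idx i) (rep_lt Hi); rewrite iter_idx // => ->.
  by rewrite /off /rep.
- move=> [[] j] Hj; rewrite /= in Hj.
    rewrite /psiC /= subst1 /phiC /=.
    by apply: (Yeq (@Can_RY (size reps) Ks)).
  rewrite /psiC /= subst1 /phiC /= comp_nth // /off /idx rep_nth //.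
  by rewrite /cycN /clenN /= eqxx sumk0 oppr0.
Qed.
End Cyc.

Lemma cnt_flatten (ss : seq (seq gletter)) : cnt (flatten ss) = (\sum_(l <- ss) cnt l)%R.
Proof. elim: ss => [|l ss IH]; first by rewrite big_nil. by rewrite /= cnt_cat IH big_cons. Qed.

Section Main.
Variables (n : nat) (w : seq (fvb_gen n)).
Let pmF := (cl_data w).1.
Let L := (cl_data w).2.
Let nxt := fun s => index s pmF.
Let kk := fun j => cnt (nth [::] L j).

Lemma closure_eq : fvb_closure w =
  [seq flatten [seq nth [::] L j | j <- cycN n nxt s] | s <- repsN n nxt].
Proof. by []. Qed.

Lemma m_nlt s : s < n -> nxt s < n.
Proof.
move=> Hs; rewrite /nxt /pmF; have [-> _] := cl_index w Hs; have [_ IH] := cl_inv w.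
by have [] := IH s Hs.
Qed.

Lemma m_ninj s t : s < n -> t < n -> nxt s = nxt t -> s = t.
Proof.
move=> Hs Ht E; have [_ IH] := cl_inv w.
have [_ Es _] := IH s Hs; have [_ Et _] := IH t Ht.
have [Is _] := cl_index w Hs; have [It _] := cl_index w Ht.
rewrite /nxt /pmF Is It in E.
by rewrite -Es -Et E.
Qed.

Lemma inv_closure : map cnt (fvb_closure w) = Ks n nxt kk.
Proof.
rewrite closure_eq -map_comp /Ks; apply: eq_map => s.
change (cnt (flatten [seq nth [::] L j | j <- cycN n nxt s]) = \sum_(j <- cycN n nxt s) kk j)%R.
by rewrite cnt_flatten big_map.
Qed.

Lemma grel_can : 0 < n ->
  pres_iso n (Grel w) (size (fvb_closure w)) (Can (size (fvb_closure w)) (map cnt (fvb_closure w))).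
Proof.
move=> n0.
apply: pres_iso_trans (Grel_Std w) _.
apply: (@pres_iso_trans _ _ _ (Std n nxt kk)).
  apply: pres_iso_id.
  - move=> r [[i [Hi ->]]|HY]; last exact: Std_RY.
    apply: greq_relator; left; exists i; split=> //.
    by rewrite /nxt /kk /L /pmF; have [-> ->] := cl_index w Hi.
  - move=> r [[i [Hi ->]]|HY]; last exact: Std_RY.
    apply: greq_relator; left; exists i; split=> //.
    by rewrite /nxt /kk /L /pmF; have [-> ->] := cl_index w Hi.
rewrite inv_closure closure_eq size_map.
exact: (std_can m_nlt m_ninj kk n0).
Qed.

Lemma closure_pos : 0 < n -> 0 < size (fvb_closure w).
Proof. by move=> n0; rewrite closure_eq size_map; apply: (reps_gt0 m_nlt m_ninj n0). Qed.

End Main.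

Lemma closure0 (w : seq (fvb_gen 0)) : fvb_closure w = [::].
Proof. by []. Qed.

Lemma can_perm c Ks Ks' : perm_eq Ks Ks' -> pres_iso c (Can c Ks) c (Can c Ks').
Proof.
move=> P; apply: pres_iso_id.
- move=> r [[K HK ->]|HY]; apply: greq_relator; [left; exists K => //; by rewrite -(perm_mem P) | by right].
- move=> r [[K HK ->]|HY]; apply: greq_relator; [left; exists K => //; by rewrite (perm_mem P) | by right].
Qed.

Theorem theorem8 (n n' : nat) (w : seq (fvb_gen n)) (w' : seq (fvb_gen n')) :
  flat_equiv (fvb_closure w) (fvb_closure w') ->
  pres_iso n (Grel w) n' (Grel w').
Proof.
move=> H; have P := flat_equiv_inv H.
have S : size (fvb_closure w) = size (fvb_closure w').
  by have := perm_size P; rewrite !size_map.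
clear H; case: n w P S => [|n] w P S.
  case: n' w' P S => [|n'] w' P S.
    exists (fun _ => [::]), (fun _ => [::]).
    split; [|split; [|split; [|split; [|split]]]]; try by move=> [? ?].
    - by move=> r [i [Hi _]].
    - by move=> r [i [Hi _]].
  by have := closure_pos w' (ltn0Sn n'); rewrite -S closure0.
case: n' w' P S => [|n'] w' P S.
  by have := closure_pos w (ltn0Sn n); rewrite S closure0.
apply: pres_iso_trans (grel_can w (ltn0Sn n)) _.
apply: pres_iso_sym; apply: pres_iso_trans (grel_can w' (ltn0Sn n')) _.
rewrite -S; apply: can_perm; by rewrite perm_sym.
Qed.
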